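(* Let $p\ge 2$ be an integer. If there exist constants $\alpha,\beta$ such that $\mathrm{conv}^{\leq p}_{\mathcal F}(n)\le \alpha n+\beta$ for every nonnegative integer $n$, then $\mathrm{id}^{\leq p}_{\mathcal F}(n)\le \alpha n+2\beta$ for every nonnegative integer $n$.
   Context: All graphs are finite and simple. For an oriented graph $D$ and $X\subseteq V(D)$, the inversion of $X$ reverses every arc with both endvertices in $X$; a $(\leq p)$-inversion is the inversion of a set of at most $p$ vertices. $\mathrm{id}^{\leq p}(G)$ is the maximum, over all ordered pairs $(\vec G_1,\vec G_2)$ of orientations of $G$, of the minimum number of $(\leq p)$-inversions transforming $\vec G_1$ into $\vec G_2$. $\mathrm{conv}^{\leq p}(G)$ is the minimum number of $(\leq p)$-inversions transforming an orientation of $G$ into its converse (all arcs reversed); it does not depend on the orientation. $\mathrm{id}^{\leq p}_{\mathcal F}(n)$ (resp. $\mathrm{conv}^{\leq p}_{\mathcal F}(n)$) is the maximum of $\mathrm{id}^{\leq p}(F)$ (resp. $\mathrm{conv}^{\leq p}(F)$) over all forests $F$ of order $n$. *)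

(* Defs.v *)
From mathcomp Require Import all_boot all_order all_algebra.
From Stdlib Require Import ClassicalEpsilon.
Set Implicit Arguments. Unset Strict Implicit. Unset Printing Implicit Defensive.

(* For an (undirected) graph G, G (u,v) means uv is an edge;
   for an oriented graph D, D (u,v) means there is an arc u -> v. *)
Definition graph n := {ffun 'I_n * 'I_n -> bool}.

Definition grel n (G : graph n) : rel 'I_n := fun u v => G (u, v).

Definition simple_graph n (G : graph n) : bool :=
  [forall u, ~~ G (u, u)] && [forall u, forall v, G (u, v) == G (v, u)].

Definition is_forest n (G : graph n) : Prop :=
  simple_graph G /\
  forall s : seq 'I_n, uniq s -> 3 <= size s -> ~~ cycle (grel G) s.

Definition is_orientation n (G D : graph n) : bool :=
  [forall u, forall v,
     (D (u, v) ==> G (u, v)) && (G (u, v) ==> (D (u, v) != D (v, u)))].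

Definition invert n (X : {set 'I_n}) (D : graph n) : graph n :=
  [ffun uv => if (uv.1 \in X) && (uv.2 \in X) then D (uv.2, uv.1) else D uv].

Definition invert_seq n (s : seq {set 'I_n}) (D : graph n) : graph n :=
  foldl (fun D' X => invert X D') D s.

Definition reach n (p : nat) (D1 D2 : graph n) : pred nat := fun k =>
  [exists s : k.-tuple {set 'I_n},
     all (fun X : {set 'I_n} => #|X| <= p) s && (invert_seq s D1 == D2)].

(* minimum number of (<= p)-inversions transforming D1 into D2
   (0 by convention if impossible, which never happens for p >= 2 when
   D1, D2 are orientations of the same graph) *)
Definition inv_dist n (p : nat) (D1 D2 : graph n) : nat :=
  match excluded_middle_informative (exists k, reach p D1 D2 k) with
  | left H => ex_minn H
  | right _ => 0
  end.

Definition converse n (D : graph n) : graph n := [ffun uv => D (uv.2, uv.1)].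

Definition idp n (p : nat) (G : graph n) : nat :=
  \max_(D1 : graph n | is_orientation G D1)
    \max_(D2 : graph n | is_orientation G D2) inv_dist p D1 D2.

Definition std_orient n (G : graph n) : graph n :=
  [ffun uv => G uv && (uv.1 < uv.2)%N].

(* conv^{<= p}(G) (independent of the orientation chosen) *)
Definition convp n (p : nat) (G : graph n) : nat :=
  inv_dist p (std_orient G) (converse (std_orient G)).

Definition forestb n (G : graph n) : bool :=
  if excluded_middle_informative (is_forest G) then true else false.

Definition idF (p n : nat) : nat :=
  \max_(G : graph n | forestb G) idp p G.
Definition convF (p n : nat) : nat :=
  \max_(G : graph n | forestb G) convp p G.

(* Main.v *)
Require Import Defs.
From mathcomp Require Import all_boot all_order all_algebra.
From mathcomp Require Import zify.
From mathcomp Require Import lra.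
From Stdlib Require Import ClassicalEpsilon.
Set Implicit Arguments. Unset Strict Implicit. Unset Printing Implicit Defensive.
Definition cnt n (s : seq {set 'I_n}) (u v : 'I_n) :=
  count (fun X : {set 'I_n} => (u \in X) && (v \in X)) s.

Lemma invert_seqE n s (D : graph n) u v :
  invert_seq s D (u,v) = if odd (cnt s u v) then D (v,u) else D (u,v).
Proof.
elim: s D => [|X s IH] D //=.
rewrite /invert_seq /= -/(invert_seq s (invert X D)) IH !ffunE /= oddD.
by case: (u \in X); case: (v \in X); case: (odd _).
Qed.

Lemma simpleP n (G : graph n) : simple_graph G ->
  (forall u, ~~ G (u,u)) /\ (forall u v, G (u,v) = G (v,u)).
Proof.
case/andP => /forallP H1 /forallP H2; split => // u v.
by apply/eqP; move/forallP: (H2 u); apply.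
Qed.

Lemma forest_color n (G : graph n) (w : 'I_n -> 'I_n -> bool) :
  simple_graph G ->
  (forall s : seq 'I_n, uniq s -> 3 <= size s -> ~~ cycle (Defs.grel G) s) ->
  (forall u v, G (u,v) -> w u v = w v u) ->
  exists c : 'I_n -> bool, forall u v, G (u,v) -> c u (+) c v = w u v.
Proof.
move: {2}#|[set uv | G uv]| (leqnn #|[set uv | G uv]|) => m.
elim: m G => [|m IH] G Hm Hs Ha Hw.
  exists (fun _ => false) => u v Huv; exfalso.
  have : 0 < #|[set uv | G uv]| by apply/card_gt0P; exists (u,v); rewrite inE.
  by rewrite lt0n; move: Hm; rewrite leqn0 => ->.
have [Hirr Hsym] := simpleP Hs.
case: (pickP (fun uv => G uv)) => [[a b] Hab | H0]; last first.
  by exists (fun _ => false) => u v Huv; move: (H0 (u,v)) => /= ; rewrite Huv.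
pose G' : graph n := [ffun uv => G uv && (uv != (a,b)) && (uv != (b,a))].
have HG'G : forall uv, G' uv -> G uv by move=> uv; rewrite ffunE => /andP [/andP [] ].
have Hs' : simple_graph G'.
  apply/andP; split; apply/forallP => u.
    by rewrite ffunE (negbTE (Hirr u)).
  apply/forallP => v; apply/eqP; rewrite !ffunE !xpair_eqE Hsym.
  by case: (u == a); case: (v == b); case: (u == b); case: (v == a);
     rewrite ?andbF ?andbT.
have Hm' : #|[set uv | G' uv]| <= m.
  have : [set uv | G' uv] \proper [set uv | G uv].
    apply/properP; split.
      by apply/subsetP => uv; rewrite !inE; apply: HG'G.
    by exists (a,b); rewrite !inE ?ffunE ?eqxx ?andbF.
  by move/proper_card => H; rewrite -ltnS; apply: leq_trans H Hm.
have Ha' : forall s : seq 'I_n, uniq s -> 3 <= size s -> ~~ cycle (Defs.grel G') s.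
  move=> s Hu Hsz; apply/negP => Hc; move/negP: (Ha s Hu Hsz); apply.
  by apply: sub_cycle Hc => x y; apply: HG'G.
have [c' Hc'] := IH G' Hm' Hs' Ha' (fun u v H => Hw u v (HG'G _ H)).
have Hsym' : symmetric (Defs.grel G').
  move=> x y; have [_ S] := simpleP Hs'; exact: S.
have Hnc : ~~ connect (Defs.grel G') a b.
  apply/negP => /connectP [q Hq Hlast].
  move: Hlast; case/shortenP: Hq => q' Hq' Huq _ Hlast.
  have Hcyc : cycle (Defs.grel G) (a :: q').
    rewrite /= rcons_path (sub_path _ Hq') -?Hlast.
      by rewrite /Defs.grel Hsym.
    by move=> x y; apply: HG'G.
  have Hsz : 3 <= size (a :: q').
    case: q' Hq' Huq Hlast {Hcyc} => [|x [|y q'']] //=.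
      by move=> _ _ Hb; move: (Hirr a); rewrite -{2}Hb Hab.
    by rewrite andbT => Hax _ Hb; move: Hax; rewrite /Defs.grel ffunE -Hb eqxx andbF.
  by move/negP: (Ha _ Huq Hsz).
pose flip := (c' a (+) c' b) != w a b.
exists (fun x => c' x (+) (connect (Defs.grel G') a x && flip)) => u v Huv.
case HG' : (G' (u,v)).
  have [_ S'] := simpleP Hs'.
  have -> : connect (Defs.grel G') a v = connect (Defs.grel G') a u.
    apply/idP/idP => H; apply: connect_trans H (connect1 _);
      rewrite /Defs.grel //; by rewrite -S'.
  rewrite -Hc' //.
  by case: (c' u); case: (c' v); case: (_ && _).
move: HG'; rewrite ffunE Huv /= => /negbT; rewrite negb_and !negbK.
have Hab' : connect (Defs.grel G') a b = false by apply/negbTE.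
case/orP => /eqP [-> ->].
  rewrite connect0 Hab' /flip.
  by case: (c' a); case: (c' b); case: (w a b).
have E : w b a = w a b by apply: Hw; rewrite Hsym.
rewrite connect0 Hab' /flip E.
by case: (c' a); case: (c' b); case: (w a b).
Qed.

Lemma cntC n (s : seq {set 'I_n}) u v : cnt s u v = cnt s v u.
Proof. by apply: eq_count => X; rewrite andbC. Qed.

Lemma conv_crit n (s : seq {set 'I_n}) (D : graph n) :
  (forall u v, D (u,v) != D (v,u) -> odd (cnt s u v)) ->
  invert_seq s D = converse D.
Proof.
move=> H; apply/ffunP => -[u v]; rewrite invert_seqE ffunE /=.
case Ho: (odd _) => //.
case: (D (u,v) =P D (v,u)) => // /eqP Hne.
by rewrite (H _ _ Hne) in Ho.
Qed.

Lemma inv_dist_le n p (D1 D2 : graph n) k : reach p D1 D2 k -> inv_dist p D1 D2 <= k.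
Proof.
move=> Hk; rewrite /inv_dist; case: excluded_middle_informative => [H|H].
  by case: ex_minnP => m _ Hmin; apply: Hmin.
by exfalso; apply: H; exists k.
Qed.

Lemma reach_seq n p (D1 D2 : graph n) (s : seq {set 'I_n}) :
  all (fun X : {set 'I_n} => #|X| <= p) s -> invert_seq s D1 = D2 ->
  reach p D1 D2 (size s).
Proof.
move=> Ha Hi; apply/existsP; exists (in_tuple s); by rewrite /= Ha Hi eqxx.
Qed.

Lemma conv_exists m p (G : graph m) : simple_graph G -> 2 <= p ->
  exists k, reach p (std_orient G) (converse (std_orient G)) k.
Proof.
move=> Hs Hp; have [Hirr Hsym] := simpleP Hs.
pose P := [pred ij : 'I_m * 'I_m | G ij && (ij.1 < ij.2)].
pose s := [seq [set ij.1; ij.2] | ij <- enum P].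
exists (size s); apply: reach_seq.
  apply/allP => X /mapP [ij _ ->]; rewrite cards2.
  by apply: leq_trans Hp; case: (_ != _).
have key : forall u v : 'I_m, u < v -> G (u,v) -> odd (cnt s u v).
  move=> u v Huv Guv; rewrite /cnt count_map.
  rewrite (@eq_in_count _ _ (pred1 (u,v))); last first.
    move=> [i j]; rewrite mem_enum inE /= => /andP [_ Hij].
    rewrite !in_set2 xpair_eqE -!val_eqE /=.
    by do ! (case: eqP => ? /=); lia.
  by rewrite count_uniq_mem ?enum_uniq // mem_enum inE /= Guv Huv.
apply: conv_crit => u v; rewrite !ffunE /=.
case: (ltngtP u v) => [Huv|Hvu|/val_inj ->]; rewrite ?andbT ?andbF.
- by case Guv: (G (u,v)) => // _; apply: key.
- by case Gvu: (G (v,u)) => // _; rewrite cntC; apply: key.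
- by rewrite eqxx.
Qed.

Lemma conv_seq m p (G : graph m) : simple_graph G -> 2 <= p ->
  exists s : seq {set 'I_m}, [/\ size s = convp p G,
    all (fun X : {set 'I_m} => #|X| <= p) s &
    forall u v, G (u,v) -> odd (cnt s u v)].
Proof.
move=> Hs Hp; have [Hirr Hsym] := simpleP Hs.
rewrite /convp /inv_dist; case: excluded_middle_informative => [H|H]; last first.
  by exfalso; apply: H; apply: conv_exists.
case: ex_minnP => k /existsP [t /andP [Ha /eqP Hi]] _.
exists t; split => //; first by rewrite size_tuple.
move=> u v Guv.
have E := congr1 (fun D : graph m => D (u,v)) Hi.
have E' := congr1 (fun D : graph m => D (v,u)) Hi.
move: E E'; rewrite /= !invert_seqE !ffunE /= Guv -Hsym Guv /= (cntC _ v u).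
case: (ltngtP u v) => [Huv|Hvu|/val_inj Huv] //=.
- by case: (odd _).
- by case: (odd _).
- by move: (Hirr u) Guv; rewrite {2}Huv => /negbTE ->.
Qed.

Definition subg n (F : graph n) (V : {set 'I_n}) : graph #|V| :=
  [ffun uv => F (enum_val uv.1, enum_val uv.2)].

Lemma subg_forest n (F : graph n) V : is_forest F -> is_forest (subg F V).
Proof.
case=> Hs Ha; have [Hirr Hsym] := simpleP Hs; split.
  apply/andP; split; apply/forallP => u; rewrite ?ffunE //.
  by apply/forallP => v; rewrite !ffunE /= Hsym.
move=> s Hu Hsz; apply/negP => Hc.
have H1 : uniq (map enum_val s) by rewrite map_inj_uniq //; apply: enum_val_inj.
have H2 : 3 <= size (map enum_val s) by rewrite size_map.
move/negP: (Ha _ H1 H2); apply.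
by rewrite cycle_map; apply: sub_cycle Hc => x y; rewrite /Defs.grel ffunE.
Qed.

Lemma orientP n (G D : graph n) : is_orientation G D ->
  (forall u v, D (u,v) -> G (u,v)) /\ (forall u v, G (u,v) -> D (v,u) = ~~ D (u,v)).
Proof.
move/forallP => H; split => u v.
  by move/forallP: (H u) => /(_ v) /andP [/implyP].
move/forallP: (H u) => /(_ v) /andP [_ /implyP H2] /H2.
by case: (D (u,v)); case: (D (v,u)).
Qed.

Definition emb n (V : {set 'I_n}) (X : {set 'I_#|V|}) : {set 'I_n} :=
  [set enum_val x | x in X].
Arguments emb {n} V X.

Lemma cnt_emb_in n (V : {set 'I_n}) s i j :
  cnt (map (emb V) s) (enum_val i) (enum_val j) = cnt s i j.
Proof.
rewrite /cnt count_map; apply: eq_count => X /=.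
by rewrite /emb !mem_imset //; apply: enum_val_inj.
Qed.

Lemma cnt_emb_out n (V : {set 'I_n}) s u v : u \notin V ->
  cnt (map (emb V) s) u v = 0.
Proof.
move=> Hu; rewrite /cnt count_map; apply/eqP; rewrite -leqn0.
rewrite leqNgt -has_count; apply/hasP => -[X _ /= /andP [/imsetP [x _ Hx] _]].
by move: Hu; rewrite Hx enum_valP.
Qed.

Lemma core n p (F : graph n) D1 D2 : 2 <= p -> is_forest F ->
  is_orientation F D1 -> is_orientation F D2 ->
  exists V : {set 'I_n},
    inv_dist p D1 D2 <= convp p (subg F V) + convp p (subg F (~: V)).
Proof.
move=> Hp HF HO1 HO2; have [Hs Ha] := HF; have [Hirr Hsym] := simpleP Hs.
have [S1 R1] := orientP HO1; have [S2 R2] := orientP HO2.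
have [c Hc] := @forest_color n F (fun u v => D1 (u,v) == D2 (u,v)) Hs Ha
  (fun u v Huv => ltac:(rewrite /= (R1 u v Huv) (R2 u v Huv);
                        by case: (D1 (u,v)); case: (D2 (u,v)))).
pose V := [set u | c u]; exists V.
have [HF1 _] := subg_forest V HF; have [HF2 _] := subg_forest (~: V) HF.
have [s1 [Hsz1 Ha1 Ho1]] := conv_seq HF1 Hp.
have [s2 [Hsz2 Ha2 Ho2]] := conv_seq HF2 Hp.
pose t := map (emb V) s1 ++ map (emb (~: V)) s2.
have Hpar : forall u v, F (u,v) -> odd (cnt t u v) = ((u \in V) == (v \in V)).
  move=> u v Huv.
  have -> : cnt t u v = cnt (map (emb V) s1) u v + cnt (map (emb (~: V)) s2) u v.
    by rewrite /cnt count_cat.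
  case Hu: (u \in V); case Hv: (v \in V).
  - rewrite (@cnt_emb_out _ (~: V) s2 u v); last by rewrite inE Hu.
    rewrite addn0 -(enum_rankK_in Hu Hu) -(enum_rankK_in Hu Hv) cnt_emb_in Ho1 //.
    by rewrite ffunE /= !(enum_rankK_in Hu).
  - rewrite (@cnt_emb_out _ (~: V) s2 u v); last by rewrite inE Hu.
    by rewrite cntC (@cnt_emb_out _ V s1 v u) // Hv.
  - rewrite (@cnt_emb_out _ V s1 u v); last by rewrite Hu.
    by rewrite cntC (@cnt_emb_out _ (~: V) s2 v u) // inE Hv.
  - have Hu' : u \in ~: V by rewrite inE Hu.
    have Hv' : v \in ~: V by rewrite inE Hv.
    rewrite (@cnt_emb_out _ V s1 u v); last by rewrite Hu.
    rewrite add0n -(enum_rankK_in Hu' Hu') -(enum_rankK_in Hu' Hv') cnt_emb_in Ho2 //.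
    by rewrite ffunE /= !(enum_rankK_in Hu').
have Hall : all (fun X : {set 'I_n} => #|X| <= p) t.
  rewrite all_cat !all_map; apply/andP; split.
    apply/allP => X HX /=; apply: leq_trans (leq_imset_card _ _) _.
    exact: (allP Ha1).
  apply/allP => X HX /=; apply: leq_trans (leq_imset_card _ _) _.
  exact: (allP Ha2).
have Hinv : invert_seq t D1 = D2.
  apply/ffunP => -[u v]; rewrite invert_seqE.
  case Huv: (F (u,v)).
    rewrite Hpar // R1 //; move: (Hc u v Huv); rewrite /V !inE /=.
    by case: (c u); case: (c v); case: (D1 (u,v)); case: (D2 (u,v)).
  have E1 : D1 (u,v) = false by apply/negbTE; apply: (contraFN (S1 u v) Huv).
  have E2 : D2 (u,v) = false by apply/negbTE; apply: (contraFN (S2 u v) Huv).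
  have E3 : D1 (v,u) = false.
    by apply/negbTE; apply: (contraFN (S1 v u)); rewrite -Hsym.
  by rewrite E1 E2 E3; case: (odd _).
have := inv_dist_le (reach_seq Hall Hinv).
by rewrite size_cat !size_map Hsz1 Hsz2.
Qed.

Lemma conv_le_F n p (F : graph n) V : is_forest F ->
  convp p (subg F V) <= convF p #|V|.
Proof.
move=> HF; rewrite /convF; apply: (@leq_bigmax_cond _ _ _ (subg F V)).
rewrite /forestb; case: excluded_middle_informative => // H.
by exfalso; apply: H; apply: subg_forest.
Qed.

Unset Implicit Arguments.
Import Order.TTheory GRing.Theory Num.Theory.
Local Open Scope ring_scope.

Theorem mainTheorem15 (R : realFieldType) (p : nat) (alpha beta : R) :
  (2 <= p)%N ->
  (forall n : nat, (convF p n)%:R <= alpha * n%:R + beta) ->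
  forall n : nat, (idF p n)%:R <= alpha * n%:R + 2 * beta.
Proof.
move=> Hp Hconv n.
have Hb : 0 <= beta.
  have := Hconv 0%N; rewrite mulr0 add0r; apply: le_trans; exact: ler0n.
have HB : 0 <= alpha * n%:R + 2 * beta.
  have := Hconv n => H; have := ler0n R (convF p n) => H0; lra.
pose K := fun x : nat => x%:R <= alpha * n%:R + 2 * beta.
have Kmax : forall x y, K x -> K y -> K (maxn x y).
  by move=> x y Hx Hy; rewrite /maxn; case: ifP.
rewrite /idF; apply: (big_ind K) => //.
move=> G HG.
have HF : is_forest G.
  by move: HG; rewrite /forestb; case: excluded_middle_informative.
rewrite /idp; apply: (big_ind K) => //.
move=> D1 HD1; apply: (big_ind K) => //.
move=> D2 HD2; rewrite /K.
have [V HV] := core Hp HF HD1 HD2.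
have H1 := conv_le_F p V HF; have H2 := conv_le_F p (~: V) HF.
have Hn : (#|V| + #|~: V|)%N = n by rewrite cardsC card_ord.
have C1 := Hconv #|V|; have C2 := Hconv #|~: V|.
apply: le_trans (_ : (convF p #|V| + convF p #|~: V|)%N%:R <= _).
  by rewrite ler_nat; apply: leq_trans HV (leq_add H1 H2).
have En : (n%:R : R) = #|V|%:R + #|~: V|%:R by rewrite -natrD Hn.
rewrite natrD En; lra.
Qed.
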